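(* In System $\mathsf{F_\wedge}$, if $\Theta, X <: S, \Theta' \vdash t : T$, then $\Theta, X <: \top, \Theta'[X\wedge S/X] \vdash t[X\wedge S/X] : T[X \wedge S/X]$.
   Context: System $\mathsf{F_\wedge}$: raw types $T ::= \top \mid X \mid T \to T \mid \forall X.T \mid T \wedge T$ ($\forall X.T$ means $\forall(X<:\top).T$), up to $\alpha$-conversion. Contexts: finite sequences of $X<:T$ or $x:T$ with distinct variables, each type well-formed over the preceding part. Subtyping rules: (Var) $\Theta,X<:T,\Theta'\vdash X<:T$; (Top) $T<:\top$; (Refl); (Trans); ($\to$) from $S'<:S$, $T<:T'$ infer $S\to T<:S'\to T'$; ($\forall$) from $\Theta,X<:\top\vdash S<:T$ infer $\Theta\vdash\forall X.S<:\forall X.T$; (meet) $S\wedge S'<:S$, $S\wedge S'<:S'$, from $T<:S$, $T<:S'$ infer $T<:S\wedge S'$. Raw terms $t ::= \mathsf{top} \mid x \mid \lambda(x:T).t \mid \Lambda(X<:T).t \mid t\,t \mid t\{T\}$. Typing rules: $\Theta\vdash\mathsf{top}:\top$; $\Theta,x:T,\Theta'\vdash x:T$; (sub) from $t:T$ and $T<:T'$ infer $t:T'$; from $\Theta,x:S\vdash t:T$ infer $\Theta\vdash\lambda(x:S).t:S\to T$; from $t:S\to T$ and $s:S$ infer $t\,s:T$; from $\Theta,X<:S\vdash t:T$ infer $\Theta\vdash\Lambda(X<:S).t:\forall(X<:S).T$; from $\Theta\vdash t:\forall(X<:S).T$ and $\Theta\vdash S'<:S$ infer $\Theta\vdash t\{S'\}:T[S'/X]$.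 For a context or term, $[X\wedge S/X]$ denotes substituting $X\wedge S$ for the type variable $X$ in all types occurring in it (type annotations, bounds, assumption types). *)

(* Defs.v *)
(* Free variables are atoms (nat); bound variables are de Bruijn indices.
   Raw terms/types "up to alpha-conversion" = locally nameless syntax. *)
From Stdlib Require Import List Arith.
Import ListNotations.

Definition atom := nat.

(* Types.  [tall U T] is the bounded quantifier forall (X <: U). T ;
   the paper's  forall X. T  is  [tall ttop T]. *)
Inductive typ : Type :=
  | ttop  : typ
  | tbvar : nat -> typ
  | tfvar : atom -> typ
  | tarr  : typ -> typ -> typ
  | tall  : typ -> typ -> typ
  | tmeet : typ -> typ -> typ.

Inductive trm : Type :=
  | ttopv : trm
  | bvar  : nat -> trm
  | fvar  : atom -> trm
  | abs   : typ -> trm -> trm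
  | tabs  : typ -> trm -> trm
  | app   : trm -> trm -> trm
  | tapp  : trm -> typ -> trm.

Fixpoint open_tt_rec (k : nat) (U : typ) (T : typ) : typ :=
  match T with
  | ttop => ttop
  | tbvar j => if Nat.eqb k j then U else tbvar j
  | tfvar X => tfvar X
  | tarr T1 T2 => tarr (open_tt_rec k U T1) (open_tt_rec k U T2)
  | tall T1 T2 => tall (open_tt_rec k U T1) (open_tt_rec (S k) U T2)
  | tmeet T1 T2 => tmeet (open_tt_rec k U T1) (open_tt_rec k U T2)
  end.
Definition open_tt (T U : typ) := open_tt_rec 0 U T.

Fixpoint open_te_rec (k : nat) (U : typ) (e : trm) : trm :=
  match e with
  | ttopv => ttopv
  | bvar i => bvar i
  | fvar x => fvar x
  | abs V e1 => abs (open_tt_rec k U V) (open_te_rec k U e1)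
  | tabs V e1 => tabs (open_tt_rec k U V) (open_te_rec (S k) U e1)
  | app e1 e2 => app (open_te_rec k U e1) (open_te_rec k U e2)
  | tapp e1 V => tapp (open_te_rec k U e1) (open_tt_rec k U V)
  end.
Definition open_te (e : trm) (U : typ) := open_te_rec 0 U e.

Fixpoint open_ee_rec (k : nat) (f : trm) (e : trm) : trm :=
  match e with
  | ttopv => ttopv
  | bvar i => if Nat.eqb k i then f else bvar i
  | fvar x => fvar x
  | abs V e1 => abs V (open_ee_rec (S k) f e1)
  | tabs V e1 => tabs V (open_ee_rec k f e1)
  | app e1 e2 => app (open_ee_rec k f e1) (open_ee_rec k f e2)
  | tapp e1 V => tapp (open_ee_rec k f e1) V
  end.
Definition open_ee (e f : trm) := open_ee_rec 0 f e.

Fixpoint subst_tt (Z : atom) (U : typ) (T : typ) : typ :=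
  match T with
  | ttop => ttop
  | tbvar j => tbvar j
  | tfvar X => if Nat.eqb X Z then U else tfvar X
  | tarr T1 T2 => tarr (subst_tt Z U T1) (subst_tt Z U T2)
  | tall T1 T2 => tall (subst_tt Z U T1) (subst_tt Z U T2)
  | tmeet T1 T2 => tmeet (subst_tt Z U T1) (subst_tt Z U T2)
  end.

Fixpoint subst_te (Z : atom) (U : typ) (e : trm) : trm :=
  match e with
  | ttopv => ttopv
  | bvar i => bvar i
  | fvar x => fvar x
  | abs V e1 => abs (subst_tt Z U V) (subst_te Z U e1)
  | tabs V e1 => tabs (subst_tt Z U V) (subst_te Z U e1)
  | app e1 e2 => app (subst_te Z U e1) (subst_te Z U e2)
  | tapp e1 V => tapp (subst_te Z U e1) (subst_tt Z U V)
  end.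

(* Contexts: lists in paper order (leftmost binding first). *)
Inductive binding : Type :=
  | bsub : typ -> binding
  | btyp : typ -> binding.

Definition env := list (atom * binding).

Definition dom (E : env) : list atom := map fst E.

Definition subst_b (Z : atom) (U : typ) (b : binding) : binding :=
  match b with
  | bsub T => bsub (subst_tt Z U T)
  | btyp T => btyp (subst_tt Z U T)
  end.

Definition subst_env (Z : atom) (U : typ) (E : env) : env :=
  map (fun p => (fst p, subst_b Z U (snd p))) E.

Inductive wf_typ : env -> typ -> Prop :=
  | wf_typ_top : forall E, wf_typ E ttop
  | wf_typ_var : forall E X U, In (X, bsub U) E -> wf_typ E (tfvar X)
  | wf_typ_arrow : forall E T1 T2,
      wf_typ E T1 -> wf_typ E T2 -> wf_typ E (tarr T1 T2)
  | wf_typ_all : forall (L : list atom) E T1 T2,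
      wf_typ E T1 ->
      (forall X, ~ In X L ->
         wf_typ (E ++ [(X, bsub T1)]) (open_tt T2 (tfvar X))) ->
      wf_typ E (tall T1 T2)
  | wf_typ_meet : forall E T1 T2,
      wf_typ E T1 -> wf_typ E T2 -> wf_typ E (tmeet T1 T2).

Inductive wf_env : env -> Prop :=
  | wf_env_empty : wf_env []
  | wf_env_sub : forall E X T,
      wf_env E -> wf_typ E T -> ~ In X (dom E) ->
      wf_env (E ++ [(X, bsub T)])
  | wf_env_typ : forall E x T,
      wf_env E -> wf_typ E T -> ~ In x (dom E) ->
      wf_env (E ++ [(x, btyp T)]).

Inductive sub : env -> typ -> typ -> Prop :=
  | sub_var : forall E X T,
      wf_env E -> In (X, bsub T) E -> sub E (tfvar X) T
  | sub_top : forall E S,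
      wf_env E -> wf_typ E S -> sub E S ttop
  | sub_refl : forall E T,
      wf_env E -> wf_typ E T -> sub E T T
  | sub_trans : forall E S T U,
      sub E S T -> sub E T U -> sub E S U
  | sub_arrow : forall E S S' T T',
      sub E S' S -> sub E T T' -> sub E (tarr S T) (tarr S' T')
  | sub_all : forall (L : list atom) E S T,
      (forall X, ~ In X L ->
         sub (E ++ [(X, bsub ttop)]) (open_tt S (tfvar X)) (open_tt T (tfvar X))) ->
      sub E (tall ttop S) (tall ttop T)
  | sub_meet_l : forall E S S',
      wf_env E -> wf_typ E S -> wf_typ E S' -> sub E (tmeet S S') S
  | sub_meet_r : forall E S S',
      wf_env E -> wf_typ E S -> wf_typ E S' -> sub E (tmeet S S') S'
  | sub_meet : forall E T S S',
      sub E T S -> sub E T S' -> sub E T (tmeet S S').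

Inductive typing : env -> trm -> typ -> Prop :=
  | typing_top : forall E, wf_env E -> typing E ttopv ttop
  | typing_var : forall E x T,
      wf_env E -> In (x, btyp T) E -> typing E (fvar x) T
  | typing_sub : forall E t T T',
      typing E t T -> sub E T T' -> typing E t T'
  | typing_abs : forall (L : list atom) E S t T,
      (forall x, ~ In x L ->
         typing (E ++ [(x, btyp S)]) (open_ee t (fvar x)) T) ->
      typing E (abs S t) (tarr S T)
  | typing_app : forall E t s S T,
      typing E t (tarr S T) -> typing E s S -> typing E (app t s) T
  | typing_tabs : forall (L : list atom) E S t T,
      (forall X, ~ In X L ->
         typing (E ++ [(X, bsub S)]) (open_te t (tfvar X)) (open_tt T (tfvar X))) ->
      typing E (tabs S t) (tall S T)
  | typing_tapp : forall E t S T S',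
      typing E t (tall S T) -> sub E S' S ->
      typing E (tapp t S') (open_tt T S').

(* Main.v *)
Require Import Defs.
From Stdlib Require Import List.
Import ListNotations.
From Stdlib Require Import Arith Lia.

Fixpoint fv_tt (T : typ) : list atom :=
  match T with
  | ttop => []
  | tbvar _ => []
  | tfvar X => [X]
  | tarr A B => fv_tt A ++ fv_tt B
  | tall A B => fv_tt A ++ fv_tt B
  | tmeet A B => fv_tt A ++ fv_tt B
  end.

Fixpoint cl (n : nat) (T : typ) : Prop :=
  match T with
  | ttop => True
  | tbvar j => j < n
  | tfvar _ => True
  | tarr A B => cl n A /\ cl n B
  | tall A B => cl n A /\ cl (Datatypes.S n) B
  | tmeet A B => cl n A /\ cl n B
  end.

Definition typ_of (b : binding) : typ := match b with bsub T => T | btyp T => T end.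

Lemma open_cl : forall T n Y, cl n (open_tt_rec n (tfvar Y) T) -> cl (Datatypes.S n) T.
Proof.
  induction T as [| j | Z | A IHA B IHB | A IHA B IHB | A IHA B IHB]; simpl; intros n Y H; auto.
  - destruct (Nat.eqb_spec n j); simpl in H; lia.
  - destruct H; split; eauto.
  - destruct H; split; eauto.
  - destruct H; split; eauto.
Qed.

Lemma cl_open_id : forall T n k W, cl n T -> n <= k -> open_tt_rec k W T = T.
Proof.
  induction T as [| j | Z | A IHA B IHB | A IHA B IHB | A IHA B IHB]; simpl; intros n k W H Hle; auto.
  - destruct (Nat.eqb_spec k j); [lia | reflexivity].
  - destruct H; rewrite (IHA n), (IHB n); auto.
  - destruct H; rewrite (IHA n), (IHB (Datatypes.S n)); auto; lia.
  - destruct H; rewrite (IHA n), (IHB n); auto.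
Qed.

Lemma fresh : forall L : list atom, exists Y, ~ In Y L.
Proof.
  intros L. exists (Datatypes.S (fold_right plus 0 L)).
  assert (forall x, In x L -> x <= fold_right plus 0 L).
  { induction L; simpl; intros x Hx; [contradiction|]. destruct Hx; subst; [lia|].
    specialize (IHL x H); lia. }
  intro Hin; apply H in Hin; lia.
Qed.

Lemma wf_cl : forall E T, wf_typ E T -> cl 0 T.
Proof.
  induction 1; simpl; auto.
  split; auto. destruct (fresh L) as [Y HY].
  eapply open_cl. apply (H1 Y HY).
Qed.

Lemma closed_open : forall E T k W, wf_typ E T -> open_tt_rec k W T = T.
Proof. intros. eapply cl_open_id; [eapply wf_cl; eauto | lia]. Qed.

Lemma fv_open : forall T k V Z, In Z (fv_tt T) -> In Z (fv_tt (open_tt_rec k V T)).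
Proof.
  induction T; simpl; intros k V Z H; try contradiction; auto;
  rewrite in_app_iff in *; destruct H; eauto.
Qed.

Lemma in_dom : forall E x b, In (x, b) E -> In x (dom E).
Proof. intros. unfold dom. change x with (fst (x, b)). apply in_map; auto. Qed.

Lemma wf_fv : forall E T, wf_typ E T -> forall Z, In Z (fv_tt T) -> In Z (dom E).
Proof.
  induction 1; simpl; intros Z HZ; try contradiction.
  - destruct HZ as [<- | []]. eapply in_dom; eauto.
  - rewrite in_app_iff in HZ; destruct HZ; auto.
  - rewrite in_app_iff in HZ; destruct HZ; auto.
    destruct (fresh (Z :: L)) as [Y HY].
    assert (HYL : ~ In Y L) by (intro; apply HY; right; auto).
    specialize (H1 Y HYL Z (fv_open _ _ _ _ H2)).
    unfold dom in H1; rewrite map_app, in_app_iff in H1; simpl in H1.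
    destruct H1 as [? | [? | []]]; auto. subst; exfalso; apply HY; left; auto.
  - rewrite in_app_iff in HZ; destruct HZ; auto.
Qed.

Lemma subst_fresh : forall T X U, ~ In X (fv_tt T) -> subst_tt X U T = T.
Proof.
  induction T; simpl; intros X U H; auto.
  - destruct (Nat.eqb_spec a X); subst; auto. exfalso; apply H; left; auto.
  - rewrite in_app_iff in H; rewrite IHT1, IHT2; auto.
  - rewrite in_app_iff in H; rewrite IHT1, IHT2; auto.
  - rewrite in_app_iff in H; rewrite IHT1, IHT2; auto.
Qed.

Lemma subst_open : forall T X U k V, (forall k W, open_tt_rec k W U = U) ->
  subst_tt X U (open_tt_rec k V T) = open_tt_rec k (subst_tt X U V) (subst_tt X U T).
Proof.
  induction T; intros X U k V HU; simpl.
  - reflexivity.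
  - destruct (k =? n); reflexivity.
  - destruct (a =? X); simpl; [rewrite HU|]; reflexivity.
  - rewrite IHT1, IHT2; auto.
  - rewrite IHT1, IHT2; auto.
  - rewrite IHT1, IHT2; auto.
Qed.

Lemma subst_te_open_te : forall t X U k V, (forall k W, open_tt_rec k W U = U) ->
  subst_te X U (open_te_rec k V t) = open_te_rec k (subst_tt X U V) (subst_te X U t).
Proof.
  induction t; intros X U k V HU; simpl; auto;
  repeat rewrite subst_open by auto; try rewrite IHt; try rewrite IHt1; try rewrite IHt2; auto.
Qed.

Lemma subst_te_open_ee : forall t X U k x,
  subst_te X U (open_ee_rec k (fvar x) t) = open_ee_rec k (fvar x) (subst_te X U t).
Proof.
  induction t; intros X U k x; simpl; auto;
  try rewrite IHt; try rewrite IHt1; try rewrite IHt2; auto.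
  destruct (k =? n); reflexivity.
Qed.

Lemma subst_fvar_neq : forall X U Y, Y <> X -> subst_tt X U (tfvar Y) = tfvar Y.
Proof. intros; simpl. destruct (Nat.eqb_spec Y X); congruence. Qed.

Lemma env_eq : forall (Th : env) p A B, Th ++ [p] ++ (A ++ B) = (Th ++ [p] ++ A) ++ B.
Proof. intros; rewrite !app_assoc; reflexivity. Qed.

Lemma subst_env_snoc : forall X U E y b,
  subst_env X U (E ++ [(y, b)]) = subst_env X U E ++ [(y, subst_b X U b)].
Proof. intros; unfold subst_env; rewrite map_app; reflexivity. Qed.

Lemma dom_subst_env : forall X U E, dom (subst_env X U E) = dom E.
Proof. induction E; simpl; auto. rewrite IHE; auto. Qed.

Lemma dom_eq : forall (Th E : env) X b b' U,
  dom (Th ++ [(X, b')] ++ subst_env X U E) = dom (Th ++ [(X, b)] ++ E).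
Proof. intros; unfold dom; rewrite !map_app; simpl. f_equal. f_equal.
  apply dom_subst_env. Qed.

Lemma in_subst_env : forall X U E y b, In (y, b) E -> In (y, subst_b X U b) (subst_env X U E).
Proof. intros. unfold subst_env. apply in_map_iff. exists (y, b); auto. Qed.

Lemma wf_env_snoc_inv : forall E x b, wf_env (E ++ [(x, b)]) ->
  wf_env E /\ ~ In x (dom E) /\ wf_typ E (typ_of b).
Proof.
  intros E x b H. inversion H.
  - exfalso; eapply app_cons_not_nil; eauto.
  - apply app_inj_tail in H0; destruct H0 as [-> Hp]; inversion Hp; subst; simpl; auto.
  - apply app_inj_tail in H0; destruct H0 as [-> Hp]; inversion Hp; subst; simpl; auto.
Qed.

Lemma wf_env_app_l : forall F E, wf_env (E ++ F) -> wf_env E.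
Proof.
  induction F using rev_ind; intros E H.
  - rewrite app_nil_r in H; auto.
  - rewrite app_assoc in H. destruct x as [y b]. apply wf_env_snoc_inv in H. apply IHF; tauto.
Qed.

Lemma wf_env_mid_r : forall Th X b Th', wf_env (Th ++ [(X, b)] ++ Th') -> ~ In X (dom Th').
Proof.
  intros Th X b Th'. induction Th' using rev_ind; intros H.
  - simpl; auto.
  - destruct x as [y b']. rewrite env_eq in H. apply wf_env_snoc_inv in H.
    destruct H as [H1 [H2 _]].
    unfold dom; rewrite map_app, in_app_iff; simpl. intros [? | [? | []]].
    + apply IHTh'; auto.
    + subst. apply H2. unfold dom; rewrite !map_app, !in_app_iff; simpl; auto.
Qed.

Lemma wf_env_mid : forall Th X b Th', wf_env (Th ++ [(X, b)] ++ Th') ->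
  wf_env Th /\ ~ In X (dom Th) /\ wf_typ Th (typ_of b) /\ ~ In X (dom Th').
Proof.
  intros. pose proof (wf_env_mid_r _ _ _ _ H).
  rewrite app_assoc in H. apply wf_env_app_l in H. apply wf_env_snoc_inv in H. tauto.
Qed.

Lemma wf_env_fv : forall E, wf_env E -> forall Y b, In (Y, b) E ->
  forall Z, In Z (fv_tt (typ_of b)) -> In Z (dom E).
Proof.
  induction 1; intros Y b Hin Z HZ; simpl in Hin; try contradiction;
  unfold dom; rewrite map_app, in_app_iff; left;
  apply in_app_or in Hin; destruct Hin as [Hin | [Heq | []]];
  try (eapply IHwf_env; eauto; fail);
  inversion Heq; subst; simpl in HZ; eapply wf_fv; eauto.
Qed.

Lemma wf_typ_mono : forall E T, wf_typ E T -> forall F,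
  (forall Y U, In (Y, bsub U) E -> exists U', In (Y, bsub U') F) -> wf_typ F T.
Proof.
  induction 1; intros F HF.
  - constructor.
  - destruct (HF X U H) as [U' ?]; econstructor; eauto.
  - constructor; auto.
  - apply wf_typ_all with L; auto. intros Y HY. apply H1; auto.
    intros Z U Hin. apply in_app_or in Hin. destruct Hin as [Hin | [Heq | []]].
    + destruct (HF Z U Hin) as [U' ?]. exists U'; apply in_or_app; auto.
    + inversion Heq; subst. eexists; apply in_or_app; right; left; eauto.
  - constructor; auto.
Qed.

Lemma U_closed : forall Th X S, wf_typ Th S ->
  forall k W, open_tt_rec k W (tmeet (tfvar X) S) = tmeet (tfvar X) S.
Proof. intros; simpl. erewrite closed_open; eauto. Qed.

Lemma wf_typ_S_mono : forall (Th : env) X b Th' S, wf_typ Th S -> wf_typ (Th ++ [(X, b)] ++ Th') S.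
Proof.
  intros. eapply wf_typ_mono; eauto. intros Y U Hin. exists U. apply in_or_app; auto.
Qed.

Lemma wf_typ_subst : forall E T, wf_typ E T -> forall Th Th' X S,
  E = Th ++ [(X, bsub S)] ++ Th' -> wf_typ Th S ->
  wf_typ (Th ++ [(X, bsub ttop)] ++ subst_env X (tmeet (tfvar X) S) Th')
         (subst_tt X (tmeet (tfvar X) S) T).
Proof.
  induction 1; intros Th Th' Z S0 HE HS; subst; simpl.
  - constructor.
  - destruct (Nat.eqb_spec X Z).
    + subst. constructor.
      * apply wf_typ_var with ttop. apply in_or_app; right; left; auto.
      * apply wf_typ_S_mono; auto.
    + apply in_app_or in H. destruct H as [H | [H | H]].
      * apply wf_typ_var with U. apply in_or_app; auto.
      * inversion H; congruence.
      * apply wf_typ_var with (subst_tt Z (tmeet (tfvar Z) S0) U).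
        apply in_or_app; right; right. apply (in_subst_env Z (tmeet (tfvar Z) S0) _ _ _ H).
  - constructor; [apply IHwf_typ1 | apply IHwf_typ2]; auto.
  - apply wf_typ_all with (Z :: L); [apply IHwf_typ; auto|].
    intros Y HY. assert (HYL : ~ In Y L) by (intro; apply HY; right; auto).
    assert (HYZ : Y <> Z) by (intro; apply HY; left; auto).
    specialize (H1 Y HYL Th (Th' ++ [(Y, bsub T1)]) Z S0 (eq_sym (env_eq _ _ _ _)) HS).
    unfold open_tt in *. rewrite subst_open in H1 by (eapply U_closed; eauto).
    rewrite subst_fvar_neq in H1 by auto.
    rewrite subst_env_snoc, env_eq in H1. exact H1.
  - constructor; [apply IHwf_typ1 | apply IHwf_typ2]; auto.
Qed.

Lemma wf_env_subst : forall Th X S Th', wf_env (Th ++ [(X, bsub S)] ++ Th') ->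
  wf_env (Th ++ [(X, bsub ttop)] ++ subst_env X (tmeet (tfvar X) S) Th').
Proof.
  intros Th X S Th'. induction Th' using rev_ind; intros H.
  - simpl in *. apply wf_env_snoc_inv in H. destruct H as [H1 [H2 _]].
    apply wf_env_sub; auto. constructor.
  - destruct x as [y b].
    pose proof (wf_env_mid _ _ _ _ H) as [_ [_ [HS _]]]. simpl in HS.
    rewrite env_eq in H. apply wf_env_snoc_inv in H. destruct H as [H1 [H2 H3]].
    rewrite subst_env_snoc, env_eq.
    assert (Hd : ~ In y (dom (Th ++ [(X, bsub ttop)] ++ subst_env X (tmeet (tfvar X) S) Th')))
      by (rewrite dom_eq with (b := bsub S); auto).
    destruct b; simpl in *.
    + apply wf_env_sub; auto. eapply wf_typ_subst; eauto.
    + apply wf_env_typ; auto. eapply wf_typ_subst; eauto.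
Qed.

Lemma in_mid_cases : forall (Th Th' : env) X b y b',
  In (y, b') (Th ++ [(X, b)] ++ Th') ->
  In (y, b') Th \/ (y = X /\ b' = b) \/ In (y, b') Th'.
Proof.
  intros. apply in_app_or in H. destruct H as [H | [H | H]]; auto.
  inversion H; subst; auto.
Qed.

Lemma sub_subst : forall E A B, sub E A B -> forall Th Th' X S,
  E = Th ++ [(X, bsub S)] ++ Th' -> wf_typ Th S ->
  sub (Th ++ [(X, bsub ttop)] ++ subst_env X (tmeet (tfvar X) S) Th')
      (subst_tt X (tmeet (tfvar X) S) A) (subst_tt X (tmeet (tfvar X) S) B).
Proof.
  induction 1; intros Th Th' Z S0 HE HS; subst.
  - pose proof (wf_env_mid _ _ _ _ H) as [HTh [HZ1 [_ HZ2]]].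
    pose proof (wf_env_subst _ _ _ _ H) as HE'.
    apply in_mid_cases in H0. simpl.
    destruct (Nat.eqb_spec X Z).
    + subst. destruct H0 as [H0 | [[_ H0] | H0]].
      * exfalso; apply HZ1; eapply in_dom; eauto.
      * inversion H0; subst.
        rewrite (subst_fresh S0) by (intro Hc; apply HZ1; eapply wf_fv; eauto).
        apply sub_meet_r; auto.
        -- apply wf_typ_var with ttop. apply in_or_app; right; left; auto.
        -- apply wf_typ_S_mono; auto.
      * exfalso; apply HZ2; eapply in_dom; eauto.
    + destruct H0 as [H0 | [[? _] | H0]]; [| congruence |].
      * rewrite subst_fresh.
        -- apply sub_var; auto. apply in_or_app; auto.
        -- intro Hc. apply HZ1. apply (wf_env_fv _ HTh _ _ H0 _ Hc).
      * apply sub_var; auto. apply in_or_app; right; right.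
        apply (in_subst_env Z (tmeet (tfvar Z) S0) _ _ _ H0).
  - simpl. apply sub_top. eapply wf_env_subst; eauto. eapply wf_typ_subst; eauto.
  - apply sub_refl. eapply wf_env_subst; eauto. eapply wf_typ_subst; eauto.
  - eapply sub_trans; [apply IHsub1 | apply IHsub2]; auto.
  - simpl; apply sub_arrow; [apply IHsub1 | apply IHsub2]; auto.
  - simpl. apply sub_all with (Z :: L).
    intros Y HY. assert (HYL : ~ In Y L) by (intro; apply HY; right; auto).
    assert (HYZ : Y <> Z) by (intro; apply HY; left; auto).
    specialize (H0 Y HYL Th (Th' ++ [(Y, bsub ttop)]) Z S0 (eq_sym (env_eq _ _ _ _)) HS).
    unfold open_tt in *. rewrite !subst_open in H0 by (eapply U_closed; eauto).
    rewrite subst_fvar_neq in H0 by auto.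
    rewrite subst_env_snoc, env_eq in H0. exact H0.
  - simpl. apply sub_meet_l. eapply wf_env_subst; eauto.
    eapply wf_typ_subst; eauto. eapply wf_typ_subst; eauto.
  - simpl. apply sub_meet_r. eapply wf_env_subst; eauto.
    eapply wf_typ_subst; eauto. eapply wf_typ_subst; eauto.
  - simpl. apply sub_meet; [apply IHsub1 | apply IHsub2]; auto.
Qed.

Lemma typing_subst : forall E t T, typing E t T -> forall Th Th' X S,
  E = Th ++ [(X, bsub S)] ++ Th' -> wf_typ Th S ->
  typing (Th ++ [(X, bsub ttop)] ++ subst_env X (tmeet (tfvar X) S) Th')
      (subst_te X (tmeet (tfvar X) S) t) (subst_tt X (tmeet (tfvar X) S) T).
Proof.
  induction 1; intros Th Th' Z S0 HE HS; subst.
  - simpl. constructor. eapply wf_env_subst; eauto.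
  - pose proof (wf_env_mid _ _ _ _ H) as [HTh [HZ1 [_ HZ2]]].
    pose proof (wf_env_subst _ _ _ _ H) as HE'.
    apply in_mid_cases in H0. simpl.
    destruct H0 as [H0 | [[_ H0] | H0]]; [| discriminate |].
    + rewrite subst_fresh.
      * apply typing_var; auto. apply in_or_app; auto.
      * intro Hc. apply HZ1. apply (wf_env_fv _ HTh _ _ H0 _ Hc).
    + apply typing_var; auto. apply in_or_app; right; right.
      apply (in_subst_env Z (tmeet (tfvar Z) S0) _ _ _ H0).
  - eapply typing_sub; eauto. eapply sub_subst; eauto.
  - simpl. apply typing_abs with L. intros x Hx.
    specialize (H0 x Hx Th (Th' ++ [(x, btyp S)]) Z S0 (eq_sym (env_eq _ _ _ _)) HS).
    unfold open_ee in *. rewrite subst_te_open_ee in H0.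
    rewrite subst_env_snoc, env_eq in H0. exact H0.
  - simpl. eapply typing_app; [apply IHtyping1 | apply IHtyping2]; auto.
  - simpl. apply typing_tabs with (Z :: L).
    intros Y HY. assert (HYL : ~ In Y L) by (intro; apply HY; right; auto).
    assert (HYZ : Y <> Z) by (intro; apply HY; left; auto).
    specialize (H0 Y HYL Th (Th' ++ [(Y, bsub S)]) Z S0 (eq_sym (env_eq _ _ _ _)) HS).
    unfold open_tt, open_te in *. rewrite subst_open in H0 by (eapply U_closed; eauto).
    rewrite subst_te_open_te in H0 by (eapply U_closed; eauto).
    rewrite subst_fvar_neq in H0 by auto.
    rewrite subst_env_snoc, env_eq in H0. exact H0.
  - simpl. unfold open_tt. rewrite subst_open by (eapply U_closed; eauto).
    eapply typing_tapp.
    + apply IHtyping; auto.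
    + eapply sub_subst; eauto.
Qed.

Lemma typing_wf_env : forall E t T, typing E t T -> wf_env E.
Proof.
  induction 1; auto.
  - destruct (fresh L) as [x Hx]. apply H0 in Hx. apply wf_env_snoc_inv in Hx; tauto.
  - destruct (fresh L) as [x Hx]. apply H0 in Hx. apply wf_env_snoc_inv in Hx; tauto.
Qed.

Theorem lemma5p3 :
  forall (Theta Theta' : env) (X : atom) (S : typ) (t : trm) (T : typ),
    typing (Theta ++ [(X, bsub S)] ++ Theta') t T ->
    typing (Theta ++ [(X, bsub ttop)] ++ subst_env X (tmeet (tfvar X) S) Theta')
           (subst_te X (tmeet (tfvar X) S) t)
           (subst_tt X (tmeet (tfvar X) S) T).
Proof.
  intros Theta Theta' X S t T H.
  pose proof (typing_wf_env _ _ _ H) as HE.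
  apply wf_env_mid in HE. destruct HE as [_ [_ [HS _]]]. simpl in HS.
  eapply typing_subst; eauto.
Qed.
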